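(* Let $\alpha\ge 0$, $\beta\in\mathbb{R}$, $\gamma\ge 0$, and let $a\in C^2(\mathbb{R}_+)$ satisfy the differential equation $$-(x+\gamma)\,a''(x)-2a'(x)+(\alpha x+\beta)\,a(x)=0,\qquad x>0 .$$ Let $A$ be the Hankel operator $(Af)(x)=\int_0^\infty a(x+y)f(y)\,dy$ and let $L$ be the differential operator $$L=-\frac{d}{dx}\,(x^2+\gamma x)\,\frac{d}{dx}+\alpha x^2+\beta x .$$ Let $f\in C^2(\mathbb{R}_+)$ satisfy $$\lim_{y\to 0}(y^2+\gamma y)f(y)=\lim_{y\to 0}(y^2+\gamma y)f'(y)=0$$ and, for all $x\ge 0$, $$\lim_{y\to\infty}a'(x+y)(y^2+\gamma y)f(y)=\lim_{y\to\infty}a(x+y)(y^2+\gamma y)f'(y)=0 .$$ Then $(LA-AL)f=0$, i.e. $L(Af)=A(Lf)$ on $(0,\infty)$.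
   Context: $\mathbb{R}_+=(0,\infty)$. Here $L$ is understood as a formal differential expression acting on $C^2$ functions on $\mathbb{R}_+$ and $A$ as the integral expression above; it is tacitly assumed (as in the paper) that the integrals defining $Af$, $A(Lf)$ converge and that differentiation under the integral sign in $L(Af)$ is permitted. *)

(* Defs.v *)
From Stdlib Require Import Reals.
From Coquelicot Require Import Coquelicot.
Open Scope R_scope.

Definition C2_pos (f : R -> R) : Prop :=
  forall x, 0 < x ->
    ex_derive f x /\ ex_derive (Derive f) x /\ continuous (Derive_n f 2) x.

Definition int0inf (g : R -> R) : R :=
  RInt_gen g (at_right 0) (Rbar_locally p_infty).
Definition ex_int0inf (g : R -> R) : Prop :=
  ex_RInt_gen g (at_right 0) (Rbar_locally p_infty).

Definition Hankel (a f : R -> R) (x : R) : R :=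
  int0inf (fun y => a (x + y) * f y).

Definition Lop (alpha beta gamma : R) (g : R -> R) (x : R) : R :=
  - Derive (fun t => (t ^ 2 + gamma * t) * Derive g t) x
  + (alpha * x ^ 2 + beta * x) * g x.

(* Main.v *)
Require Import Defs.
From Stdlib Require Import Reals Lra.
From Coquelicot Require Import Coquelicot.
Open Scope R_scope.

Lemma der_shift (g : R -> R) x y l : is_derive g (x+y) l -> is_derive (fun t => g (x+t)) y l.
Proof.
  intro H.
  assert (Hx : is_derive (fun t => x + t) y 1) by (auto_derive; auto; ring).
  pose proof (is_derive_comp g (fun t => x+t) y l 1 H Hx) as H2.
  replace l with (scal 1 l); [exact H2|].
  unfold scal; simpl; unfold mult; simpl; ring.
Qed.

Lemma der_mul (f g : R -> R) y df dg : is_derive f y df -> is_derive g y dg ->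
  is_derive (fun t => f t * g t) y (df * g y + f y * dg).
Proof. intros; apply (is_derive_mult f g); auto. intros; apply Rmult_comm. Qed.

Lemma der_plus (f g : R -> R) y df dg : is_derive f y df -> is_derive g y dg ->
  is_derive (fun t => f t + g t) y (df + dg).
Proof. intros; apply (is_derive_plus f g); auto. Qed.

Lemma der_minus (f g : R -> R) y df dg : is_derive f y df -> is_derive g y dg ->
  is_derive (fun t => f t - g t) y (df - dg).
Proof. intros; apply (is_derive_minus f g); auto. Qed.

Lemma der_opp (f : R -> R) y df : is_derive f y df ->
  is_derive (fun t => - f t) y (- df).
Proof. intros; apply (is_derive_opp f); auto. Qed.

Lemma cont_mul (f g : R -> R) y : continuous f y -> continuous g y -> continuous (fun t => f t * g t) y.
Proof. intros; apply (continuous_mult f g); auto. Qed.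
Lemma cont_plus (f g : R -> R) y : continuous f y -> continuous g y -> continuous (fun t => f t + g t) y.
Proof. intros; apply (continuous_plus f g); auto. Qed.
Lemma cont_minus (f g : R -> R) y : continuous f y -> continuous g y -> continuous (fun t => f t - g t) y.
Proof. intros; apply (continuous_minus f g); auto. Qed.
Lemma cont_opp (f : R -> R) y : continuous f y -> continuous (fun t => - f t) y.
Proof. intros; apply (continuous_opp f); auto. Qed.

Lemma loc_pos y : 0 < y -> locally y (fun z => 0 < z).
Proof.
  intro Hy. exists (mkposreal y Hy). intros z Hz.
  unfold ball in Hz; simpl in Hz; unfold AbsRing_ball, abs, minus, plus, opp in Hz; simpl in Hz.
  apply Rabs_def2 in Hz. simpl in Hz. lra.
Qed.

Lemma lim_shift (g : R -> R) x : continuous g x ->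
  filterlim (fun y => g (x+y)) (at_right 0) (locally (g x)).
Proof.
  intro Hc. apply filterlim_comp with (G := locally x); [|exact Hc].
  intros P [eps He]. unfold filtermap, at_right, within. exists eps.
  intros y Hy _. apply He.
  unfold ball in *; simpl in *; unfold AbsRing_ball, abs, minus, plus, opp in *; simpl in *.
  replace (x + y + - x) with (y + - 0) by ring. exact Hy.
Qed.

Section Lims.
Context {F : (R -> Prop) -> Prop} {FF : Filter F}.
Lemma lim_mul (f g : R -> R) lf lg : filterlim f F (locally lf) -> filterlim g F (locally lg) ->
  filterlim (fun y => f y * g y) F (locally (lf * lg)).
Proof. intros. apply (filterlim_comp_2 (G:=locally lf) (H:=locally lg) f g Rmult); auto. apply (filterlim_mult lf lg). Qed.
Lemma lim_plus (f g : R -> R) lf lg : filterlim f F (locally lf) -> filterlim g F (locally lg) ->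
  filterlim (fun y => f y + g y) F (locally (lf + lg)).
Proof. intros. apply (filterlim_comp_2 (G:=locally lf) (H:=locally lg) f g Rplus); auto. apply (filterlim_plus lf lg). Qed.
Lemma lim_opp (f : R -> R) lf : filterlim f F (locally lf) ->
  filterlim (fun y => - f y) F (locally (- lf)).
Proof. intros. apply (filterlim_comp _ _ _ f Ropp F (locally lf)); auto. apply (filterlim_opp lf). Qed.
End Lims.

Lemma fp_pos : filter_prod (at_right 0) (Rbar_locally p_infty)
  (fun ab => 0 < fst ab /\ 0 < snd ab).
Proof.
  apply Filter_prod with (fun a => 0 < a) (fun b => 0 < b).
  - unfold at_right, within. apply filter_forall. auto.
  - exists 0. auto.
  - simpl; auto.
Qed.

Lemma fp_pos_le (P : R -> Prop) : (forall z, 0 < z -> P z) ->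
  filter_prod (at_right 0) (Rbar_locally p_infty)
   (fun ab => forall z, Rmin (fst ab) (snd ab) <= z <= Rmax (fst ab) (snd ab) -> P z).
Proof.
  intro HP. eapply filter_imp; [|exact fp_pos]. intros [a b] [Ha Hb] z Hz; simpl in *.
  apply HP. assert (0 < Rmin a b) by (apply Rmin_glb_lt; auto). lra.
Qed.

Lemma fp_pos_lt (P : R -> Prop) : (forall z, 0 < z -> P z) ->
  filter_prod (at_right 0) (Rbar_locally p_infty)
   (fun ab => forall z, Rmin (fst ab) (snd ab) < z < Rmax (fst ab) (snd ab) -> P z).
Proof.
  intro HP. eapply filter_imp; [|exact fp_pos]. intros [a b] [Ha Hb] z Hz; simpl in *.
  apply HP. assert (0 < Rmin a b) by (apply Rmin_glb_lt; auto). lra.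
Qed.

Lemma cor (g : R -> R) : ex_int0inf g -> is_RInt_gen g (at_right 0) (Rbar_locally p_infty) (int0inf g).
Proof. intro H. unfold int0inf. apply (RInt_gen_correct (V := R_CompleteNormedModule) (Fa := at_right 0) (Fb := Rbar_locally p_infty)); auto.
Qed.
Lemma RK_lem (g1 g2 g3 : R->R) c1 c2 c3 : ex_int0inf g1 -> ex_int0inf g2 -> ex_int0inf g3 ->
  is_RInt_gen (fun y => c1 * g1 y + c2 * g2 y + c3 * g3 y) (at_right 0) (Rbar_locally p_infty)
    (c1 * int0inf g1 + c2 * int0inf g2 + c3 * int0inf g3).
Proof.
  intros H1 H2 H3.
  apply cor in H1; apply cor in H2; apply cor in H3.
  apply (is_RInt_gen_scal _ c1) in H1. apply (is_RInt_gen_scal _ c2) in H2. apply (is_RInt_gen_scal _ c3) in H3.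
  pose proof (is_RInt_gen_plus _ _ _ _ (is_RInt_gen_plus _ _ _ _ H1 H2) H3) as H.
  exact H.
Qed.

Theorem theorem2p1 (alpha beta gamma : R) (a f : R -> R) :
  0 <= alpha -> 0 <= gamma ->
  C2_pos a ->
  (forall x, 0 < x ->
     - (x + gamma) * Derive_n a 2 x - 2 * Derive a x + (alpha * x + beta) * a x = 0) ->
  C2_pos f ->
  filterlim (fun y => (y ^ 2 + gamma * y) * f y) (at_right 0) (locally 0) ->
  filterlim (fun y => (y ^ 2 + gamma * y) * Derive f y) (at_right 0) (locally 0) ->
  (forall x, 0 <= x ->
     is_lim (fun y => Derive a (x + y) * ((y ^ 2 + gamma * y) * f y)) p_infty 0) ->
  (forall x, 0 <= x ->
     is_lim (fun y => a (x + y) * ((y ^ 2 + gamma * y) * Derive f y)) p_infty 0) ->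
  (forall x, 0 < x -> ex_int0inf (fun y => a (x + y) * f y)) ->
  (forall x, 0 < x -> ex_int0inf (fun y => a (x + y) * Lop alpha beta gamma f y)) ->
  (forall x, 0 < x -> ex_int0inf (fun y => Derive a (x + y) * f y)) ->
  (forall x, 0 < x -> ex_int0inf (fun y => Derive_n a 2 (x + y) * f y)) ->
  (forall x, 0 < x ->
     is_derive (Hankel a f) x (int0inf (fun y => Derive a (x + y) * f y))) ->
  (forall x, 0 < x ->
     is_derive (fun t => int0inf (fun y => Derive a (t + y) * f y)) x
               (int0inf (fun y => Derive_n a 2 (x + y) * f y))) ->
  forall x, 0 < x ->
    Lop alpha beta gamma (Hankel a f) x = Hankel a (Lop alpha beta gamma f) x.
Proof.
  intros Ha0 Hg0 Ca ODE Cf L0f L0df Linf1 Linf2 IA IG IB IC DA DB x Hx.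
  set (p := fun y => y ^ 2 + gamma * y).
  assert (Dp : forall y, is_derive p y (2 * y + gamma)) by (intros; unfold p; auto_derive; auto; ring).
  set (IBx := int0inf (fun y => Derive a (x + y) * f y)).
  set (ICx := int0inf (fun y => Derive_n a 2 (x + y) * f y)).
  set (IAx := int0inf (fun y => a (x + y) * f y)).
  assert (LHS : Lop alpha beta gamma (Hankel a f) x =
     - ((2 * x + gamma) * IBx + p x * ICx) + (alpha * x ^ 2 + beta * x) * IAx).
  { unfold Lop. f_equal. f_equal. apply is_derive_unique.
    apply is_derive_ext_loc with (f := fun t => p t * int0inf (fun y => Derive a (t + y) * f y)).
    - eapply filter_imp; [|apply (loc_pos x Hx)]. intros t Ht. simpl.
      f_equal. symmetry. apply is_derive_unique. apply DA; auto.
    - apply der_mul; auto. }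
  rewrite LHS. clear LHS.
  assert (Dxa : forall y, 0 < y -> is_derive (fun t => a (x + t)) y (Derive a (x + y))).
  { intros y Hy. apply der_shift. apply Derive_correct. apply Ca. lra. }
  assert (Dxda : forall y, 0 < y -> is_derive (fun t => Derive a (x + t)) y (Derive (Derive a) (x + y))).
  { intros y Hy. apply der_shift. apply Derive_correct. apply Ca. lra. }
  assert (Dfy : forall y, 0 < y -> is_derive f y (Derive f y)).
  { intros y Hy. apply Derive_correct. apply Cf. lra. }
  assert (Ddfy : forall y, 0 < y -> is_derive (Derive f) y (Derive (Derive f) y)).
  { intros y Hy. apply Derive_correct. apply Cf. lra. }
  set (H := fun y => - (a (x + y) * (p y * Derive f y)) + Derive a (x + y) * (p y * f y)).
  set (h := fun y => - (Derive a (x + y) * (p y * Derive f y) + a (x + y) * ((2 * y + gamma) * Derive f y + p y * Derive (Derive f) y))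
     + (Derive (Derive a) (x + y) * (p y * f y) + Derive a (x + y) * ((2 * y + gamma) * f y + p y * Derive f y))).
  assert (DH : forall y, 0 < y -> is_derive H y (h y)).
  { intros y Hy. unfold H, h. apply der_plus. apply der_opp.
    apply (der_mul (fun t => a (x + t)) (fun t => p t * Derive f t)); auto.
    apply (der_mul p (Derive f)); auto.
    apply (der_mul (fun t => Derive a (x + t)) (fun t => p t * f t)); auto.
    apply (der_mul p f); auto. }
  assert (Lf : forall y, 0 < y -> Derive (fun t => (t ^ 2 + gamma * t) * Derive f t) y
            = (2 * y + gamma) * Derive f y + p y * Derive (Derive f) y).
  { intros y Hy. apply is_derive_unique. apply (der_mul p); auto. }
  assert (ctH : forall y, 0 < y -> continuous (Derive H) y).
  { intros y Hy.
    assert (ca : continuous (fun t => a (x + t)) y) by (apply (ex_derive_continuous (fun t => a (x + t))); eexists; apply Dxa; auto).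
    assert (cda : continuous (fun t => Derive a (x + t)) y) by (apply (ex_derive_continuous (fun t => Derive a (x + t))); eexists; apply Dxda; auto).
    assert (cdda : continuous (fun t => Derive (Derive a) (x + t)) y).
    { apply (continuous_comp (fun t => x + t) (Derive (Derive a))).
      apply (ex_derive_continuous (fun t => x + t)); auto_derive; auto.
      destruct (Ca (x + y)) as [_ [_ Hc]]; [lra|]. exact Hc. }
    assert (cp : continuous p y) by (apply (ex_derive_continuous p); eexists; apply Dp).
    assert (cp' : continuous (fun t => 2 * t + gamma) y) by (apply (ex_derive_continuous (fun t => 2 * t + gamma)); auto_derive; auto).
    assert (cf : continuous f y) by (apply (ex_derive_continuous f); apply Cf; auto).
    assert (cdf : continuous (Derive f) y) by (apply (ex_derive_continuous (Derive f)); apply Cf; auto).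
    assert (cddf : continuous (Derive (Derive f)) y).
    { destruct (Cf y) as [_ [_ Hc]]; [lra|]. exact Hc. }
    apply continuous_ext_loc with (g := h).
    - eapply filter_imp; [|apply (loc_pos y Hy)]. intros z Hz. symmetry. apply is_derive_unique. apply DH; auto.
    - unfold h. repeat first [assumption | apply cont_plus | apply cont_mul | apply cont_opp]. }
  assert (RH : is_RInt_gen (Derive H) (at_right 0) (Rbar_locally p_infty) (0 - 0)).
  { apply is_RInt_gen_Derive.
    - apply fp_pos_le. intros z Hz. eexists; apply DH; auto.
    - apply fp_pos_le. exact ctH.
    - assert (ca : continuous a x) by (apply (ex_derive_continuous a); apply Ca; auto).
      assert (cda : continuous (Derive a) x) by (apply (ex_derive_continuous (Derive a)); apply Ca; auto).
      pose proof (lim_plus _ _ _ _ (lim_opp _ _ (lim_mul _ _ _ _ (lim_shift a x ca) L0df))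
                    (lim_mul _ _ _ _ (lim_shift (Derive a) x cda) L0f)) as L.
      assert (E : - (a x * 0) + Derive a x * 0 = 0) by ring. rewrite E in L. exact L.
    - assert (L1 : is_lim (fun y => - (a (x + y) * ((y ^ 2 + gamma * y) * Derive f y))) p_infty (-0)).
      { exact (is_lim_opp _ _ _ (Linf2 x (Rlt_le _ _ Hx))). }
      pose proof (is_lim_plus' _ _ _ _ _ L1 (Linf1 x (Rlt_le _ _ Hx))) as L.
      assert (E : -0 + 0 = 0) by ring. rewrite E in L. exact L. }
  pose proof (RK_lem (fun y => Derive a (x + y) * f y) (fun y => Derive_n a 2 (x + y) * f y)
                (fun y => a (x + y) * f y) (- (2 * x + gamma)) (- (x ^ 2 + gamma * x))
                (alpha * x ^ 2 + beta * x) (IB x Hx) (IC x Hx) (IA x Hx)) as RK.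
  pose proof (is_RInt_gen_plus _ _ _ _ RH RK) as RT.
  apply (is_RInt_gen_ext _ (fun y => a (x + y) * Lop alpha beta gamma f y)) in RT.
  2:{ apply fp_pos_lt. intros z Hz.
      rewrite (is_derive_unique _ _ _ (DH z Hz)).
      unfold h, Lop. rewrite (Lf z Hz).
      pose proof (ODE (x + z)) as E.
      change (plus ?u ?v) with (u + v).
      change (Derive_n a 2 (x + z)) with (Derive (Derive a) (x + z)) in E |- *.
      specialize (E ltac:(lra)).
      unfold p.
      generalize dependent E.
      generalize (Derive (Derive a) (x + z)) (Derive a (x + z)) (a (x + z))
        (Derive (Derive f) z) (Derive f z) (f z).
      intros A2 A1 A0 F2 F1 F0 E.
      assert (E2 : (z - x) * F0 * (- (x + z + gamma) * A2 - 2 * A1 + (alpha * (x + z) + beta) * A0) = 0)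
        by (rewrite E; ring).
      lra. }
  apply (is_RInt_gen_unique (V := R_CompleteNormedModule)) in RT.
  unfold Hankel. fold IAx. unfold int0inf. rewrite RT.
  change (plus ?u ?v) with (u + v).
  unfold IBx, ICx, IAx, p. ring.
Qed.
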